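(* Let $f:\mathbb R^d\to\mathbb R$ be convex with a unique minimizer $x^*$. Let $(t_n)_{n\ge1}$ be positive numbers with $\sum_{n\ge1}t_n=\infty$, and let $(x_n)_{n\ge1}$ be a sequence in $\mathbb R^d$ such that $\|x_n-x^*\|\to z$ for some $z\ge0$ and $\sum_{n\ge1}t_n(f(x_n)-f(x^* ))<\infty$. Then $z=0$. *)

(* Defs.v *)
From mathcomp Require Import all_boot all_order all_algebra.
From mathcomp Require Import all_classical all_reals all_analysis.
Set Implicit Arguments. Unset Strict Implicit. Unset Printing Implicit Defensive.
Import Order.TTheory GRing.Theory Num.Theory.
Local Open Scope ring_scope.

Definition eucl_norm (R : realType) (d : nat) (v : 'rV[R]_d) : R :=
  Num.sqrt (\sum_(i < d) v ord0 i ^+ 2).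

Definition convex_fun (R : realType) (d : nat) (f : 'rV[R]_d -> R) : Prop :=
  forall (x y : 'rV[R]_d) (l : R), 0 <= l -> l <= 1 ->
    f (l *: x + (1 - l) *: y) <= l * f x + (1 - l) * f y.

Definition unique_minimizer (R : realType) (d : nat) (f : 'rV[R]_d -> R)
  (x : 'rV[R]_d) : Prop :=
  (forall y, f x <= f y) /\ (forall y, (forall w, f y <= f w) -> y = x).

(* Main.v *)
Require Import Defs.
From mathcomp Require Import all_boot all_order all_algebra.
From mathcomp Require Import all_classical all_reals all_analysis.
From mathcomp Require Import ring lra.
Import Order.TTheory GRing.Theory Num.Theory.
Import numFieldNormedType.Exports.
Local Open Scope ring_scope.
Local Open Scope classical_set_scope.

Lemma mxn_le (R : realType) d (v : 'rV[R]_d) (e : R) : 0 <= e ->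
  (`|v| <= e) <-> (forall i, `|v ord0 i| <= e).
Proof.
move=> e0; rewrite [`|v|]/Num.norm /= mx_normrE; split.
  move=> H i; apply: le_trans H.
  exact: (le_bigmax _ (fun ij : 'I_1 * 'I_d => `|v ij.1 ij.2|) (ord0, i)).
move=> H; apply/bigmax_leP; split => // -[a b] _ /=.
by rewrite (ord1 a); apply: H.
Qed.

Arguments mxn_le {R d v e}.

Lemma mxn_ge (R : realType) d (v : 'rV[R]_d) i : `|v ord0 i| <= `|v|.
Proof.
rewrite [`|v|]/Num.norm /= mx_normrE.
exact: (le_bigmax _ (fun ij : 'I_1 * 'I_d => `|v ij.1 ij.2|) (ord0, i)).
Qed.

Lemma eucl_sq (R : realType) d (v : 'rV[R]_d) :
  eucl_norm v ^+ 2 = \sum_(i < d) v ord0 i ^+ 2.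
Proof. by rewrite /eucl_norm sqr_sqrtr // sumr_ge0 // => i _; rewrite sqr_ge0. Qed.

Lemma eucl_le (R : realType) d (v : 'rV[R]_d) :
  eucl_norm v ^+ 2 <= d%:R * `|v| ^+ 2.
Proof.
have -> : d%:R * `|v| ^+ 2 = \sum_(i < d) `|v| ^+ 2.
  by rewrite sumr_const card_ord mulr_natl.
rewrite eucl_sq; apply: ler_sum => i _.
rewrite -real_normK ?num_real // lerXn2r ?nnegrE // ?mxn_ge //.
Qed.

Lemma mxn_le_eucl (R : realType) d (v : 'rV[R]_d) : `|v| <= eucl_norm v.
Proof.
apply/(mxn_le (sqrtr_ge0 _)).
move=> i; rewrite /eucl_norm -sqrtr_sqr ler_sqrt; last first.
  by rewrite sumr_ge0 // => j _; exact: sqr_ge0.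
rewrite (bigD1 i) //= lerDl sumr_ge0 // => j _; exact: sqr_ge0.
Qed.

Lemma convex_ub (R : realType) d (f : 'rV[R]_d -> R) (y : 'rV[R]_d) (del : R) :
  convex_fun f -> 0 < del -> exists B, forall w, `|w - y| <= del -> f w <= B.
Proof.
move=> cf del0.
pose vert (s : {ffun 'I_d -> bool}) :=
  \row_i (y ord0 i + (if s i then del else - del)).
exists (\sum_s `|f (vert s)|).
have vB s : f (vert s) <= \sum_s `|f (vert s)|.
  apply: le_trans (ler_norm _) _.
  by rewrite (bigD1 s) //= lerDl sumr_ge0.
set B := \sum_s _ in vB *.
suff H : forall k, (k <= d)%N -> forall w, `|w - y| <= del ->
    (forall i : 'I_d, (k <= i)%N ->
       w ord0 i = y ord0 i + del \/ w ord0 i = y ord0 i - del) -> f w <= B.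
  by move=> w hw; apply: (H d) => // i; rewrite leqNgt ltn_ord.
elim => [_ w hw hv | k IH kd w hw hv].
  have -> : w = vert [ffun i => w ord0 i == y ord0 i + del]; last exact: vB.
  apply/rowP => i; rewrite !mxE ffunE.
  case: (hv i (leq0n _)) => ->; first by rewrite eqxx.
  case: eqP => h; last by [].
  exfalso; move: h; lra.
pose i0 := Ordinal kd.
pose wl := \row_j (if j == i0 then y ord0 i0 - del else w ord0 j).
pose wr := \row_j (if j == i0 then y ord0 i0 + del else w ord0 j).
pose l := (y ord0 i0 + del - w ord0 i0) / (2 * del).
have hi0 : `|w ord0 i0 - y ord0 i0| <= del.
  by move/(mxn_le (ltW del0)): hw => /(_ i0); rewrite !mxE.
move: hi0; rewrite ler_norml => /andP[h1 h2].
have l0 : 0 <= l by rewrite divr_ge0 //; lra.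
have l1 : l <= 1 by rewrite ler_pdivrMr; lra.
have -> : w = l *: wl + (1 - l) *: wr.
  apply/rowP => j; rewrite !mxE; case: eqP => [->|_]; last by ring.
  rewrite /l; field; lra.
apply: le_trans (cf _ _ _ l0 l1) _.
have key : forall a, (a == y ord0 i0 - del) || (a == y ord0 i0 + del) ->
  f (\row_j (if j == i0 then a else w ord0 j)) <= B.
  move=> a ha; apply: IH; first exact: ltnW.
    apply/(mxn_le (ltW del0)) => j; rewrite !mxE; case: eqP => [->|_].
      by case/orP: ha => /eqP ->; rewrite ?ler_norml; apply/andP; split; lra.
    by move/(mxn_le (ltW del0)): hw => /(_ j); rewrite !mxE.
  move=> i ki; rewrite !mxE; case: eqP => [->|/eqP ni].
    by case/orP: ha => /eqP ->; [right|left].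
  apply: hv; rewrite ltn_neqAle ki andbT.
  by apply: contra ni => /eqP e; apply/eqP/val_inj.
have fl : f wl <= B by apply: key; rewrite eqxx.
have fr : f wr <= B by apply: key; rewrite eqxx orbT.
nra.
Qed.

Lemma convex_lsc (R : realType) d (f : 'rV[R]_d -> R) (y : 'rV[R]_d) :
  convex_fun f -> forall e, 0 < e ->
  exists2 rho, 0 < rho & forall w, `|w - y| < rho -> f y - e < f w.
Proof.
move=> cf e e0.
have [B hB] := @convex_ub R d f y 1 cf ltr01.
have By : f y <= B by apply: hB; rewrite subrr normr0.
have Bp : 0 < B - f y + 1 by lra.
exists (Num.min 1 (e / (B - f y + 1))).
  by rewrite lt_min ltr01 divr_gt0.
move=> w; rewrite lt_min => /andP[r1 hr].
move: hr; rewrite ltr_pdivlMr // => hr.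
have [r0|rpos] := eqVneq `|w - y| 0.
  by move/normr0_eq0/eqP: r0; rewrite subr_eq0 => /eqP ->; lra.
have rp : 0 < `|w - y| by rewrite lt_def rpos normr_ge0.
set r := `|w - y| in r1 hr rp rpos.
pose u := y - r^-1 *: (w - y).
have hu : `|u - y| <= 1.
  rewrite /u addrAC subrr add0r normrN normrZ -/r ger0_norm.
    by rewrite mulVf.
  by rewrite invr_ge0 ltW.
pose lam := (1 + r)^-1.
have l0 : 0 <= lam by rewrite invr_ge0; lra.
have l1 : lam <= 1 by rewrite invf_le1; lra.
have ey : y = lam *: w + (1 - lam) *: u.
  apply/rowP => j; rewrite !mxE /lam; field; lra.
have := cf w u lam l0 l1; rewrite -ey => H.
have fu := hB u hu.
have H2 : (1 + r) * f y <= f w + r * B.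
  have e1 : (1 + r) * lam = 1 by rewrite mulfV //; lra.
  nra.
nra.
Qed.
Lemma series_pinfty (R : realType) (t a : nat -> R) (c : R) N :
  (forall n, 0 < t n) -> (forall n, 0 <= a n) -> 0 < c ->
  (forall n, (N <= n)%N -> c <= a n) ->
  (\sum_(0 <= k <oo) (t k)%:E = +oo)%E ->
  (\sum_(0 <= k <oo) ((t k * a k)%:E) = +oo)%E.
Proof.
move=> tp a0 c0 ca tinf.
have tail_t : (\sum_(N <= k <oo) (t k)%:E = +oo)%E.
  have h := @nneseries_split R (fun k => (t k)%:E) 0 N
    (fun k _ => ltW (tp k) : (0 <= (t k)%:E)%E).
  move: h; rewrite add0n tinf sumEFin.
  by case: (\sum_(N <= k <oo) (t k)%:E)%E => // r; rewrite -EFinD.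
pose u n := ((if (N <= n)%N then c else 0) * t n)%:E.
have u0 n : (0 <= u n)%E.
  rewrite lee_fin; apply: mulr_ge0; last exact: ltW.
  by case: ifP => // _; exact: ltW.
have uv : (\sum_(0 <= k <oo) u k <= \sum_(0 <= k <oo) ((t k * a k)%:E))%E.
  apply: lee_nneseries => [n _ _|n _]; first exact: u0.
  rewrite lee_fin /u; case: ifP => h.
    by rewrite mulrC ler_wpM2l ?ca //; exact: ltW.
  by rewrite mul0r mulr_ge0 //; exact: ltW.
have tail_u : (\sum_(N <= k <oo) u k = +oo)%E.
  transitivity (c%:E * \sum_(N <= k <oo) (t k)%:E)%E; last first.
    by rewrite tail_t gt0_muley // lte_fin.
  rewrite -nneseriesZl; last by move=> k _; rewrite lee_fin ltW.
  apply: congr_lim; apply/funext => n; apply: eq_big_nat => k /andP[hk _].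
  by rewrite /u hk EFinM.
move: uv; rewrite (@nneseries_split R u 0 N) //.
rewrite add0n tail_u /= sumEFin addey //.
by rewrite leye_eq => /eqP.
Qed.

Local Open Scope ereal_scope.
Local Open Scope ring_scope.

(* Sequences are indexed by nat starting at 0 (shift of n >= 1). *)
Theorem lemma2 (R : realType) (d : nat) (f : 'rV[R]_d -> R) (xstar : 'rV[R]_d)
  (t : nat -> R) (x : nat -> 'rV[R]_d) (z : R) :
  convex_fun f ->
  unique_minimizer f xstar ->
  (forall n, 0 < t n) ->
  (\sum_(0 <= k <oo) ((t k)%:E) = +oo)%E ->
  0 <= z ->
  (fun n : nat => eucl_norm (x n - xstar)) @ \oo --> z ->
  (\sum_(0 <= k <oo) ((t k * (f (x k) - f xstar))%:E) < +oo)%E ->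
  z = 0.
Proof.
move=> cf [minx xuniq] tp tinf z0 cvgz fin.
apply/eqP; rewrite eq_le z0 andbT leNgt; apply/negP => zp.
have fx0 n : 0 <= f (x n) - f xstar by rewrite subr_ge0.
have [N0 _ hN0] : \forall n \near \oo, `|z - eucl_norm (x n - xstar)| < z / 2.
  by move/cvgrPdist_lt : cvgz; apply; rewrite divr_gt0.
have hb n : (N0 <= n)%N -> z / 2 < eucl_norm (x n - xstar) < 2 * z.
  by move=> /hN0 /=; rewrite ltr_norml => /andP[h1 h2]; apply/andP; split; lra.
have [[c c0 [N hN]]|nC] := pselect (exists2 c, 0 < c &
    exists N, forall n, (N <= n)%N -> c <= f (x n) - f xstar).
  have /= h := @series_pinfty R t (fun n => f (x n) - f xstar) c N tp fx0 c0 hN tinf.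
  by rewrite h ltxx in fin.
have H c N : 0 < c -> exists n, (N <= n)%N /\ f (x n) - f xstar < c.
  move=> c0; apply: contrapT => hn; apply: nC; exists c => //; exists N => n Nn.
  by rewrite leNgt; apply/negP => h; apply: hn; exists n.
have /choice [g hg] : forall k : nat,
    exists n, (maxn k N0 <= n)%N /\ f (x n) - f xstar < k.+1%:R^-1.
  by move=> k; apply: H; rewrite invr_gt0 ltr0Sn.
pose w k := x (g k).
have gk k : (k <= g k)%N /\ (N0 <= g k)%N.
  by have [] := hg k; rewrite geq_max => /andP[].
pose r := 2 * z.
pose K := [set v : 'rV[R]_d | forall i,
  `[xstar ord0 i - r, xstar ord0 i + r]%classic (v ord0 i)].
have cK : compact K.
  exact: (@rV_compact R d (fun i => `[xstar ord0 i - r, xstar ord0 i + r]%classic)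
    (fun i => @segment_compact R _ _)).
have Kw k : K (w k).
  move=> i /=; rewrite in_itv /=.
  have : `|(w k - xstar) ord0 i| <= r.
    apply: le_trans (@mxn_ge _ _ (w k - xstar) i) _.
    apply: le_trans (@mxn_le_eucl _ _ (w k - xstar)) _.
    by have /andP[_ h] := hb _ (proj2 (gk k)); apply: ltW.
  by rewrite !mxE ler_norml => /andP[h1 h2]; apply/andP; split; lra.
pose F := w @ \oo.
have FK : F K by exists 0%N => // k _; exact: Kw.
have [y [Ky cly]] := cK F _ FK.
have fy : f y <= f xstar.
  apply/ler_addgt0Pr => e e0.
  have e2 : 0 < e / 2 by rewrite divr_gt0.
  have [rho rho0 hrho] := @convex_lsc R d f y cf _ e2.
  have [K0 _ hK0] := near_infty_natSinv_lt (PosNum e2).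
  have := cly [set v | exists2 k, (K0 <= k)%N & v = w k] (ball y rho).
  case => [||v [[k hk ->] hbl]].
  - by exists K0 => // k' /= hk'; exists k'.
  - exact: nbhsx_ballx.
  - have h0 : `|w k - y| < rho.
      by rewrite distrC; move: hbl; rewrite -ball_normE.
    have h1 := hrho (w k) h0.
    have h2 := hK0 k hk.
    have [_ h3] := hg k.
    rewrite /= in h2; rewrite /w in h1.
    set q := k.+1%:R^-1 in h2 h3; set a := f (x (g k)) in h1 h3; set b := f y in h1 *; lra.
have yx : y = xstar by apply: xuniq => v; apply: le_trans fy (minx v).
rewrite {}yx in cly.
pose eps := z / (2 * (d%:R + 1)).
have dp : 0 < 2 * (d%:R + 1) :> R by rewrite mulr_gt0 // ltr_wpDl.
have eps0 : 0 < eps by rewrite divr_gt0.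
have := cly [set v | exists k, v = w k] (ball xstar eps).
case => [||v [[k ->] hbl]].
- by exists 0%N => // k' _; exists k'.
- exact: nbhsx_ballx.
- have h1 : `|w k - xstar| < eps.
    by rewrite distrC; move: hbl; rewrite -ball_normE.
  have h2 := @eucl_le R d (w k - xstar).
  have /andP[h3 _] := hb _ (proj2 (gk k)).
  set E := eucl_norm _ in h2 h3.
  set m := `|w k - xstar| in h1 h2.
  have m0 : 0 <= m by exact: normr_ge0.
  have he : eps * (2 * (d%:R + 1)) = z by rewrite /eps divfK // gt_eqF.
  have d0 : 0 <= d%:R :> R by exact: ler0n.
  have hm2 : m ^+ 2 <= eps ^+ 2 by rewrite lerXn2r ?nnegrE // ltW.
  have hd : d%:R * m ^+ 2 <= d%:R * eps ^+ 2 by rewrite ler_wpM2l.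
  have z2 : 0 <= z / 2 by rewrite divr_ge0 // ltW.
  have E0 : 0 <= E by apply: le_trans z2 (ltW h3).
  have hE : (z / 2) ^+ 2 < E ^+ 2 by rewrite ltrXn2r ?nnegrE.
  have hz : (z / 2) ^+ 2 = (d%:R + 1) ^+ 2 * eps ^+ 2.
    by rewrite -he; field.
  have hlt : d%:R * eps ^+ 2 < (d%:R + 1) ^+ 2 * eps ^+ 2.
    rewrite ltr_pM2r ?exprn_gt0 //; nra.
  by move: (lt_trans hE (le_lt_trans (le_trans h2 hd) hlt)); rewrite hz ltxx.
Qed.
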